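(* Let $N\in\mathbb{N}$ with $N\ge3$ and $n\in\mathbb{N}$ with $n\ge n_N$. Then there is a real $E$ with $|E|\le 5.3\cdot10^{-2}\left(\frac{5}{96}\right)^{N/2}n^{-\frac{N+2}{2}}$ such that \[ \frac{1}{(24n+1)\lambda(n)}=\frac{1}{8\cdot3^{3/4}\sqrt\pi\,n^{5/4}}\left(\sum_{m=0}^{\lfloor\frac{N+1}{2}\rfloor}\frac{e_2(m)}{n^m}+E\right). \]
   Context: $\lambda(n):=\sqrt{\frac{\pi}{6\sqrt2}\sqrt{24n+1}}$, $e_2(m):=\binom{-\frac54}{m}24^{-m}$ for $m\in\mathbb{N}_0$, and $n_N:=\left(\frac{3(3N+4)\log(6N+8)}{1.3^2}\right)^4$. *)

(* Defs.v *)
From Stdlib Require Import Reals Lra Lia Arith Factorial.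
Open Scope R_scope.

Definition lambda (n : R) : R :=
  sqrt (PI / (6 * sqrt 2) * sqrt (24 * n + 1)).

Fixpoint falling (a : R) (m : nat) : R :=
  match m with
  | O => 1
  | S k => falling a k * (a - INR k)
  end.

Definition gbinom (a : R) (m : nat) : R := falling a m / INR (fact m).

Definition e2 (m : nat) : R := gbinom (-(5/4)) m / 24 ^ m.

Definition nN (N : nat) : R :=
  (3 * (3 * INR N + 4) * ln (6 * INR N + 8) / (13/10) ^ 2) ^ 4.

(* Main.v *)
Require Import Defs.
From Coquelicot Require Import Coquelicot.
From Stdlib Require Import Reals Lra Lia Factorial.
Open Scope R_scope.

Definition fb (b : R) (t : R) : R := exp (b * ln (1 + t)).
Definition gk (b : R) (k : nat) (t : R) : R := falling b k * exp ((b - INR k) * ln (1 + t)).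

Lemma deriv_gk b k t : -1 < t -> is_derive (gk b k) t (gk b (S k) t).
Proof.
  intro Ht. unfold gk. auto_derive.
  - lra.
  - simpl falling. rewrite S_INR.
    replace ((b - INR k) * ln (1 + t)) with ((b - (INR k + 1)) * ln (1 + t) + ln (1+t)) by ring.
    rewrite exp_plus, exp_ln by lra. field. lra.
Qed.

Lemma loc_gt t : -1 < t -> locally t (fun u => -1 < u).
Proof.
  intro Ht. assert (He : 0 < t + 1) by lra.
  exists (mkposreal _ He). intros y Hy. simpl in Hy.
  unfold ball in Hy; simpl in Hy; unfold AbsRing_ball, abs, minus, plus, opp in Hy; simpl in Hy.
  apply Rabs_lt_between' in Hy. lra.
Qed.

Lemma Dn b k : forall t, -1 < t -> Derive_n (fb b) k t = gk b k t /\ ex_derive_n (fb b) k t.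
Proof.
  induction k as [|k IH]; intros t Ht.
  - split; [|exact I]. simpl. unfold fb, gk. simpl. rewrite Rminus_0_r, Rmult_1_l. reflexivity.
  - assert (L : locally t (fun u => Derive_n (fb b) k u = gk b k u)).
    { apply (filter_imp (fun u => -1 < u)); [|now apply loc_gt].
      intros u Hu. now apply IH. }
    split.
    + simpl. rewrite (Derive_ext_loc _ _ _ L). apply is_derive_unique. now apply deriv_gk.
    + simpl. apply (ex_derive_ext_loc (gk b k)).
      { apply (filter_imp (fun u => Derive_n (fb b) k u = gk b k u)); [|exact L].
        intros; now symmetry. }
      eexists. now apply deriv_gk.
Qed.

Lemma taylor b M X : 0 < X -> b <= 0 ->
  exists Rm, fb b X = sum_f_R0 (fun m => gbinom b m * X ^ m) M + Rm /\
             Rabs Rm <= Rabs (gbinom b (S M)) * X ^ (S M).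
Proof.
  intros HX Hb.
  destruct (Taylor_Lagrange (fb b) M 0 X HX) as [z [Hz Heq]].
  { intros t Ht k _. apply Dn. lra. }
  exists ((X - 0) ^ S M / INR (fact (S M)) * Derive_n (fb b) (S M) z).
  split.
  - rewrite Heq. f_equal. apply sum_eq. intros i _.
    rewrite (proj1 (Dn b i 0 ltac:(lra))). unfold gk, gbinom.
    rewrite Rplus_0_r, ln_1, Rmult_0_r, exp_0, Rminus_0_r. field.
    apply not_0_INR, fact_neq_0.
  - rewrite (proj1 (Dn b (S M) z ltac:(lra))). unfold gk, gbinom.
    rewrite Rminus_0_r.
    assert (Hf : 0 < INR (fact (S M))) by (apply lt_0_INR, lt_O_fact).
    assert (HXp : 0 < X ^ S M) by (apply pow_lt; lra).
    assert (He : 0 < exp ((b - INR (S M)) * ln (1 + z))) by apply exp_pos.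
    assert (He1 : exp ((b - INR (S M)) * ln (1 + z)) <= 1).
    { apply Rle_trans with (exp 0); [|rewrite exp_0; lra]. apply Rlt_le, exp_increasing.
      assert (0 < ln (1+z)) by (rewrite <- ln_1; apply ln_increasing; lra).
      assert (0 < INR (S M)) by (apply lt_0_INR; lia).
      assert (0 < (INR (S M) - b) * ln (1+z)) by (apply Rmult_lt_0_compat; lra).
      replace ((b - INR (S M)) * ln (1 + z)) with (- ((INR (S M) - b) * ln (1+z))) by ring. lra. }
    unfold Rdiv. rewrite !Rabs_mult, !Rabs_inv.
    rewrite (Rabs_right (X ^ S M)) by lra.
    rewrite (Rabs_right (INR (fact (S M)))) by lra.
    rewrite (Rabs_right (exp _)) by lra.
    assert (0 <= Rabs (falling b (S M))) by apply Rabs_pos.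
    assert (0 < / INR (fact (S M))) by (apply Rinv_0_lt_compat; lra).
    assert (0 <= X ^ S M * / INR (fact (S M)) * Rabs (falling b (S M))).
    { apply Rmult_le_pos; [|lra]. apply Rmult_le_pos; lra. }
    replace (Rabs (falling b (S M)) * / INR (fact (S M)) * X ^ S M)
      with (X ^ S M * / INR (fact (S M)) * Rabs (falling b (S M)) * 1) by ring.
    rewrite <- Rmult_assoc. apply Rmult_le_compat_l; lra.
Qed.

Lemma gbinom_bound k : Rabs (gbinom (-(5/4)) k) <= (5/4) ^ k.
Proof.
  induction k as [|k IH].
  - unfold gbinom; simpl. rewrite Rabs_right; lra.
  - unfold gbinom in *. simpl falling. rewrite fact_simpl, mult_INR, S_INR.
    assert (Hf : 0 < INR (fact k)) by (apply lt_0_INR, lt_O_fact).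
    assert (0 <= INR k) by apply pos_INR.
    replace (falling (- (5 / 4)) k * (- (5 / 4) - INR k) / ((INR k + 1) * INR (fact k)))
      with ((falling (- (5 / 4)) k / INR (fact k)) * (- (5 / 4 + INR k) / (INR k + 1))) by (field; lra).
    rewrite Rabs_mult. simpl pow.
    replace (Rabs (- (5 / 4 + INR k) / (INR k + 1))) with ((5 / 4 + INR k) / (INR k + 1)).
    2:{ rewrite Rabs_left. field. lra. unfold Rdiv. rewrite Ropp_mult_distr_l_reverse. apply Ropp_lt_gt_0_contravar.
        apply Rmult_lt_0_compat; [lra|]. apply Rinv_0_lt_compat; lra. }
    assert (0 <= Rabs (falling (- (5 / 4)) k / INR (fact k))) by apply Rabs_pos.
    assert ((5 / 4 + INR k) / (INR k + 1) <= 5/4).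
    { unfold Rdiv. apply (Rmult_le_reg_r (INR k + 1)); [lra|]. rewrite Rmult_assoc, Rinv_l by lra. lra. }
    nra.
Qed.

Lemma ln_sqrt' y : 0 < y -> ln (sqrt y) = ln y / 2.
Proof. intro H. rewrite <- Rpower_sqrt by lra. rewrite ln_Rpower. field. Qed.

Lemma ident (nr : R) : 1 <= nr ->
  1 / ((24 * nr + 1) * lambda nr) =
  1 / (8 * Rpower 3 (3 / 4) * sqrt PI * Rpower nr (5 / 4)) * fb (-(5/4)) (1 / (24 * nr)).
Proof.
  intro Hn. unfold lambda, fb.
  assert (HPI : 0 < PI) by apply PI_RGT_0.
  assert (Hs2 : 0 < sqrt 2) by (apply sqrt_lt_R0; lra).
  assert (HsP : 0 < sqrt PI) by (apply sqrt_lt_R0; lra).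
  assert (Ha : 0 < 24 * nr + 1) by lra.
  assert (Hsa : 0 < sqrt (24 * nr + 1)) by (apply sqrt_lt_R0; lra).
  assert (Hb : 0 < PI / (6 * sqrt 2)) by (apply Rdiv_lt_0_compat; lra).
  assert (Hc : 0 < PI / (6 * sqrt 2) * sqrt (24 * nr + 1)) by (apply Rmult_lt_0_compat; lra).
  assert (Hsc : 0 < sqrt (PI / (6 * sqrt 2) * sqrt (24 * nr + 1))) by (apply sqrt_lt_R0; lra).
  assert (HX : 0 < 1 + 1 / (24 * nr)).
  { assert (0 < 1 / (24 * nr)) by (apply Rdiv_lt_0_compat; lra). lra. }
  assert (HR3 : 0 < Rpower 3 (3/4)) by apply exp_pos.
  assert (HRn : 0 < Rpower nr (5/4)) by apply exp_pos.
  assert (HK : 0 < 8 * Rpower 3 (3 / 4) * sqrt PI * Rpower nr (5 / 4)).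
  { repeat apply Rmult_lt_0_compat; lra. }
  apply ln_inv.
  - apply Rdiv_lt_0_compat; [lra|]. apply Rmult_lt_0_compat; lra.
  - apply Rmult_lt_0_compat; [apply Rdiv_lt_0_compat; lra| apply exp_pos].
  - unfold Rdiv. rewrite !Rmult_1_l.
    rewrite ln_mult by (try apply Rinv_0_lt_compat; try apply exp_pos; lra).
    rewrite !ln_Rinv by (try apply Rmult_lt_0_compat; lra).
    rewrite ln_exp.
    rewrite ln_mult by lra.
    rewrite ln_sqrt' by lra.
    rewrite ln_mult by lra.
    rewrite ln_sqrt' by lra.
    rewrite ln_mult by (try apply Rinv_0_lt_compat; lra).
    rewrite ln_Rinv by lra.
    rewrite ln_mult by lra.
    rewrite ln_sqrt' by lra.
    rewrite ln_Rinv by exact HK. rewrite !ln_mult by (try apply Rmult_lt_0_compat; try apply Rmult_lt_0_compat; lra). rewrite ln_sqrt' by lra.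
    unfold Rpower. rewrite !ln_exp.
    assert (E1 : 24 * nr + 1 = 24 * (nr * (1 + / (24 * nr)))) by (field; lra).
    rewrite E1. rewrite !ln_mult by (try apply Rmult_lt_0_compat; lra).
    assert (E6 : ln 6 = ln 2 + ln 3) by (rewrite <- ln_mult by lra; f_equal; lra).
    assert (E8 : ln 8 = 3 * ln 2) by (replace 8 with (2*2*2) by lra; rewrite !ln_mult by lra; lra).
    assert (E24 : ln 24 = 3 * ln 2 + ln 3).
    { rewrite <- E8, <- ln_mult by lra. f_equal; lra. }
    lra.
Qed.

Lemma n_ge1 (N n : nat) (HN : (3 <= N)%nat) (Hn : nN N <= INR n) : 1 <= INR n.
Proof.
  eapply Rle_trans; [|exact Hn]. unfold nN.
  apply pow_R1_Rle.
  assert (H3 : 3 <= INR N) by (replace 3 with (INR 3) by (simpl; lra); now apply le_INR).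
  assert (Hl : 1 <= ln (6 * INR N + 8)).
  { rewrite <- ln_exp with (x := 1). apply ln_le. apply exp_pos.
    pose proof exp_le_3. lra. }
  assert (39 <= 3 * (3 * INR N + 4)) by lra.
  unfold Rdiv. apply Rle_trans with (39 * 1 * / (13/10)^2).
  - simpl. lra.
  - apply Rmult_le_compat_r. simpl. apply Rlt_le, Rinv_0_lt_compat; lra.
    apply Rmult_le_compat; lra.
Qed.

Lemma exp_le' a b : a <= b -> exp a <= exp b.
Proof. intro H. destruct (Rle_lt_or_eq_dec a b H) as [h|h]. apply Rlt_le, exp_increasing, h. subst; lra. Qed.

Theorem lemma3p13 (N n : nat) (HN : (3 <= N)%nat) (Hn : nN N <= INR n) :
  exists E : R,
    Rabs E <= 53 / 1000 * Rpower (5 / 96) (INR N / 2)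
                         * Rpower (INR n) (- ((INR N + 2) / 2)) /\
    1 / ((24 * INR n + 1) * lambda (INR n)) =
    1 / (8 * Rpower 3 (3 / 4) * sqrt PI * Rpower (INR n) (5 / 4)) *
    (sum_f_R0 (fun m => e2 m / INR n ^ m) ((N + 1) / 2) + E).
Proof.
  pose proof (n_ge1 N n HN Hn) as H1.
  set (nr := INR n) in *.
  set (M := ((N + 1) / 2)%nat).
  set (X := 1 / (24 * nr)).
  assert (HX : 0 < X) by (apply Rdiv_lt_0_compat; lra).
  destruct (taylor (-(5/4)) M X HX ltac:(lra)) as [Rm [Heq Hb]].
  exists Rm. split.
  - eapply Rle_trans; [exact Hb|].
    eapply Rle_trans.
    { apply Rmult_le_compat_r; [apply pow_le; lra | apply gbinom_bound]. }
    rewrite <- Rpow_mult_distr.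
    assert (Hq : 0 < 5 / 4 * X) by lra.
    rewrite <- Rpower_pow by exact Hq.
    assert (HM : (N <= 2 * M)%nat).
    { unfold M. pose proof (Nat.div_mod (N+1) 2 ltac:(lia)). pose proof (Nat.mod_upper_bound (N+1) 2 ltac:(lia)). lia. }
    assert (HMr : INR N <= 2 * INR M).
    { replace 2 with (INR 2) by (simpl; lra). rewrite <- mult_INR. now apply le_INR. }
    rewrite S_INR.
    assert (Eq : 5 / 4 * X = (5/96) * / nr) by (unfold X; field; lra).
    rewrite Eq. unfold Rpower.
    rewrite ln_mult by (try apply Rinv_0_lt_compat; lra).
    rewrite ln_Rinv by lra.
    assert (Hlq : ln (5/96) < 0) by (rewrite <- ln_1; apply ln_increasing; lra).
    assert (Hln : 0 <= ln nr) by (rewrite <- ln_1; apply ln_le; lra).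
    apply Rle_trans with (exp ((INR N / 2 + 1) * (ln (5 / 96) + - ln nr))).
    + apply exp_le'. assert (INR M + 1 >= INR N / 2 + 1) by lra.
      assert (0 < - (ln (5 / 96) + - ln nr)) by lra. nra.
    + replace ((INR N / 2 + 1) * (ln (5 / 96) + - ln nr)) with
        (ln (5/96) + ((INR N / 2) * ln (5/96) + (- ((INR N + 2) / 2)) * ln nr)) by field.
      rewrite !exp_plus, exp_ln by lra.
      rewrite <- Rmult_assoc.
      apply Rmult_le_compat_r. apply Rlt_le, exp_pos. apply Rmult_le_compat_r. apply Rlt_le, exp_pos.
      lra.
  - rewrite (ident nr H1). fold X. f_equal. rewrite Heq.
    replace (sum_f_R0 (fun m : nat => e2 m / nr ^ m) M) with (sum_f_R0 (fun m : nat => gbinom (- (5 / 4)) m * X ^ m) M).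
    ring.
    apply sum_eq. intros i _. unfold e2, X. unfold Rdiv. rewrite Rmult_1_l.
    rewrite pow_inv, Rpow_mult_distr. field. split; apply pow_nonzero; lra.
Qed.
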